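(* Let $K$ be an idempotent semifield. Then every finite division semialgebra $D$ over $K$ is archimedean, i.e. for every $x\in D$ there exists $y\in K$ with $x+y=y$.
   Context: A (possibly noncommutative) semiring has a commutative associative addition with identity $0$ and an associative multiplication with identity $1$, satisfying both distributive laws; a division semiring is one in which every nonzero element is invertible. A semifield is a commutative division semiring; it is idempotent if $x+x=x$ for all $x$. A division semialgebra over a semifield $K$ is a division semiring $D$ with an injective homomorphism from $K$ into the center of $D$ (identify $K$ with its image); it is finite if $D$ is finitely generated as a left $K$-semimodule. *)

(* Defs.v *)
From HB Require Import structures.
From mathcomp Require Import all_boot all_order all_algebra.
Set Implicit Arguments. Unset Strict Implicit. Unset Printing Implicit Defensive.
Import GRing.Theory.
Local Open Scope ring_scope.

(* A (possibly noncommutative) semiring: mathcomp's pzSemiRingType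
   (0 absorbing, 0 = 1 allowed). *)

Definition is_division_semiring (D : pzSemiRingType) : Prop :=
  forall x : D, x <> 0 -> exists y : D, x * y = 1 /\ y * x = 1.

Definition is_semifield (K : comPzSemiRingType) : Prop := is_division_semiring K.

Definition is_idempotent (K : pzSemiRingType) : Prop := forall x : K, x + x = x.

Definition is_division_semialgebra (K : comPzSemiRingType) (D : pzSemiRingType)
  (f : {rmorphism K -> D}) : Prop :=
  [/\ is_division_semiring D, injective f & forall (k : K) (x : D), f k * x = x * f k].

(* Finite: D is finitely generated as a left K-semimodule (scalar action k.x = f k * x). *)
Definition finite_semialgebra (K : comPzSemiRingType) (D : pzSemiRingType)
  (f : {rmorphism K -> D}) : Prop :=
  exists (n : nat) (d : 'I_n -> D),
    forall x : D, exists c : 'I_n -> K, x = \sum_(i < n) f (c i) * d i.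

Definition archimedean_semialgebra (K : comPzSemiRingType) (D : pzSemiRingType)
  (f : {rmorphism K -> D}) : Prop :=
  forall x : D, exists y : K, x + f y = f y.

(* Main.v *)
Require Import Defs.
From mathcomp Require Import all_boot all_order all_algebra.
Set Implicit Arguments. Unset Strict Implicit. Unset Printing Implicit Defensive.
Import GRing.Theory.
Local Open Scope ring_scope.

Section Idem.
Variable R : pzSemiRingType.
Hypothesis idem : forall x : R, x + x = x.
Definition leI (a b : R) := a + b = b.

Lemma leI_trans a b c : leI a b -> leI b c -> leI a c.
Proof. by rewrite /leI => h1 h2; rewrite -h2 addrA h1. Qed.

Lemma leI_addl a b : leI a (b + a).
Proof. by rewrite /leI addrCA idem. Qed.

Lemma leI_addr a b : leI a (a + b).
Proof. by rewrite /leI addrA idem. Qed.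

Lemma leI_mulr a b w : leI a b -> leI (a * w) (b * w).
Proof. by rewrite /leI -mulrDl => ->. Qed.

Lemma leI_mull a b w : leI a b -> leI (w * a) (w * b).
Proof. by rewrite /leI -mulrDr => ->. Qed.

Lemma leI_sum n (F : 'I_n -> R) w : (forall i, leI (F i) w) -> leI (\sum_(i < n) F i) w.
Proof.
move=> h; apply: (big_ind (fun v => leI v w)) => //.
  by rewrite /leI add0r.
by move=> a b ha hb; rewrite /leI -addrA hb ha.
Qed.

Lemma leI_term n (F : 'I_n -> R) i : leI (F i) (\sum_(j < n) F j).
Proof. by rewrite (bigD1 i) //=; apply: leI_addr. Qed.
End Idem.

Theorem mainTheorem19 (K : comPzSemiRingType) (D : pzSemiRingType)
  (f : {rmorphism K -> D}) :
  is_semifield K -> is_idempotent K ->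
  is_division_semialgebra f -> finite_semialgebra f ->
  archimedean_semialgebra f.
Proof.
move=> _ idK [divD _ _] [n [d hd]].
have idD : forall x : D, x + x = x.
  by move=> x; rewrite -{1 2}(mulr1 x) -mulrDr -(rmorph1 f) -rmorphD idK rmorph1 mulr1.
have hf : forall a b : K, leI a b -> leI (f a) (f b).
  by move=> a b; rewrite /leI -rmorphD => ->.
set z : D := 1 + \sum_(i < n) d i.
have key : forall (cx : 'I_n -> K),
    leI (\sum_(i < n) f (cx i) * d i) (f (\sum_(i < n) cx i) * z).
  move=> cx; apply: leI_sum => i.
  apply: (@leI_trans D _ (f (cx i) * z)).
    apply: leI_mull; apply: (@leI_trans D _ (\sum_(j < n) d j)).
      exact: leI_term.
    exact: leI_addl.
  apply: leI_mulr; apply: hf; exact: leI_term.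
have [z0|nz] := (@eqP _ z 0).
  have h10 : (1 : D) = 0.
    have := leI_addr idD 1 (\sum_(i < n) d i); rewrite /leI -/z z0 addr0 => ->.
    by [].
  move=> x; exists 0; by rewrite -(mulr1 x) h10 mulr0 add0r.
have [zi [zzi zim]] := divD z (fun e => nz (eqP (introT eqP e))).
have [cz hcz] := hd (z * z).
set c := \sum_(i < n) cz i.
have zle : leI z (f c).
  have := leI_mulr zi (key cz); rewrite -hcz -mulrA zzi mulr1 -mulrA zzi mulr1.
  by [].
move=> x; have [cx ->] := hd x.
exists ((\sum_(i < n) cx i) * c).
apply: (leI_trans (key cx)).
rewrite rmorphM; exact: leI_mull.
Qed.
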